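(* Let $(X_1,X_2)$ be jointly distributed random variables with finite alphabets $\mathcal{X}_1,\mathcal{X}_2$, and let $Y=(X_1,X_2)$ with alphabet $\mathcal{Y}=\mathcal{X}_1\times\mathcal{X}_2$. Then $I_\cap^2(\{X_1,X_2\};Y)=C_{GK}(X_1;X_2)\leq I(X_1;X_2)$.
   Context: For finite-valued random variables, $A-B-C$ means that $A$ and $C$ are conditionally independent given $B$. For jointly distributed finite random variables $(X_1,X_2,Y)$ define $$I_\cap^2(\{X_1,X_2\};Y)=\sup_{Q}\, I(Q;Y),$$ where the supremum is over all finite-valued random variables $Q$ jointly distributed with $(X_1,X_2,Y)$ (the marginal of $(X_1,X_2,Y)$ being fixed) such that both $Q-X_1-Y$ and $Q-X_2-Y$ are Markov chains. The Gács–Körner common information is defined as follows: consider the bipartite graph with vertex set $\mathcal{X}_1\cup\mathcal{X}_2$ (disjoint union) and an edge between $x_1$ and $x_2$ iff $p_{X_1X_2}(x_1,x_2)>0$; let $Q_*$ be the random variable equal to the index of the connected component of this graph containing the realized pair $(X_1,X_2)$ (the maximal common random variable of $X_1$ and $X_2$). Then $C_{GK}(X_1;X_2)=H(Q_* )$. $H$ and $I$ denote Shannon entropy and mutual information. *)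

(* Defs.v *)
(* Finite random variables are modelled
   as functions on a finite sample space carrying a probability mass function. *)
From HB Require Import structures.
From mathcomp Require Import all_boot all_order all_algebra.
From mathcomp Require Import classical_sets reals exp.
Set Implicit Arguments.
Unset Strict Implicit.
Unset Printing Implicit Defensive.
Import Order.TTheory GRing.Theory Num.Theory.
Local Open Scope ring_scope.

Section InfoDefs.
Variable R : realType.

Definition is_pmf (Om : finType) (P : Om -> R) : Prop :=
  (forall w, 0 <= P w) /\ \sum_(w : Om) P w = 1.

Definition law (Om : finType) (P : Om -> R) (T : eqType) (X : Om -> T) (t : T) : R :=
  \sum_(w : Om | X w == t) P w.

Definition rvpair (Om : finType) (A B : Type) (X : Om -> A) (Y : Om -> B) :=
  fun w => (X w, Y w).

(* Shannon entropy (natural log; convention 0 log 0 = 0) *)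
Definition entropy (Om : finType) (P : Om -> R) (T : finType) (X : Om -> T) : R :=
  - \sum_(t : T | 0 < law P X t) law P X t * ln (law P X t).

Definition minfo (Om : finType) (P : Om -> R) (A B : finType)
  (X : Om -> A) (Y : Om -> B) : R :=
  entropy P X + entropy P Y - entropy P (rvpair X Y).

(* Markov chain A - B - C : A and C conditionally independent given B,
   i.e. p(a,b,c) p(b) = p(a,b) p(b,c) for all a b c. *)
Definition markov (Om : finType) (P : Om -> R) (TA TB TC : eqType)
  (A : Om -> TA) (B : Om -> TB) (C : Om -> TC) : Prop :=
  forall a b c,
    law P (rvpair (rvpair A B) C) ((a, b), c) * law P B b
    = law P (rvpair A B) (a, b) * law P (rvpair B C) (b, c).

(* I_cap^2({X1,X2};Y) = sup over all finite-valued Q jointly distributed with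
   (X1,X2,Y) (realized on some finite probability space with the same law of
   (X1,X2,Y)) such that Q - X1 - Y and Q - X2 - Y, of I(Q;Y). *)
Definition Icap2 (Om : finType) (P : Om -> R) (T1 T2 TY : finType)
  (X1 : Om -> T1) (X2 : Om -> T2) (Y : Om -> TY) : R :=
  sup [set v : R | exists (Om' : finType) (P' : Om' -> R) (TQ : finType)
        (Q : Om' -> TQ) (X1' : Om' -> T1) (X2' : Om' -> T2) (Y' : Om' -> TY),
        [/\ is_pmf P',
            (forall t, law P' (rvpair (rvpair X1' X2') Y') t
                       = law P (rvpair (rvpair X1 X2) Y) t),
            markov P' Q X1' Y',
            markov P' Q X2' Y' &
            v = minfo P' Q Y']].

Definition gk_edge (Om : finType) (P : Om -> R) (T1 T2 : finType)
  (X1 : Om -> T1) (X2 : Om -> T2) : rel (T1 + T2) :=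
  fun u v => match u, v with
             | inl a, inr b => 0 < law P (rvpair X1 X2) (a, b)
             | inr b, inl a => 0 < law P (rvpair X1 X2) (a, b)
             | _, _ => false
             end.

(* maximal common random variable: (a canonical label of) the connected
   component containing the realized pair (X1,X2), i.e. containing X1 *)
Definition gk_common (Om : finType) (P : Om -> R) (T1 T2 : finType)
  (X1 : Om -> T1) (X2 : Om -> T2) : Om -> T1 + T2 :=
  fun w => fingraph.root (gk_edge P X1 X2) (inl (X1 w)).

Definition CGK (Om : finType) (P : Om -> R) (T1 T2 : finType)
  (X1 : Om -> T1) (X2 : Om -> T2) : R :=
  entropy P (gk_common P X1 X2).

End InfoDefs.

(* Main.v *)
Require Import Defs.
From HB Require Import structures.
From mathcomp Require Import all_boot all_order all_algebra ring lra.
From mathcomp Require Import classical_sets reals exp.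
Import Order.TTheory GRing.Theory Num.Theory.
Local Open Scope ring_scope.
Set Implicit Arguments.
Unset Strict Implicit.

Section Basic.
Variable R : realType.
Variable Om : finType.
Variable P : Om -> R.
Hypothesis P0 : forall w, 0 <= P w.

Lemma law_ge0 (T : eqType) (X : Om -> T) t : 0 <= law P X t.
Proof. by apply: sumr_ge0 => w _; apply: P0. Qed.

Lemma law_geP (T : eqType) (X : Om -> T) w : P w <= law P X (X w).
Proof.
rewrite /law (bigD1 w) //= lerDl; by apply: sumr_ge0 => i _; apply: P0.
Qed.

Lemma law_pos (T : eqType) (X : Om -> T) w : 0 < P w -> 0 < law P X (X w).
Proof. by move=> h; apply: lt_le_trans h (law_geP X w). Qed.

Lemma sum_law (T : finType) (X : Om -> T) (g : T -> R) :
  \sum_t law P X t * g t = \sum_w P w * g (X w).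
Proof.
rewrite (partition_big X xpredT) //=; apply: eq_bigr => t _.
rewrite /law mulr_suml; apply: eq_bigr => w /eqP ->; done.
Qed.

Lemma entropyE (T : finType) (X : Om -> T) :
  entropy P X = - \sum_w P w * ln (law P X (X w)).
Proof.
rewrite /entropy -(sum_law X (fun t => ln (law P X t))); congr (- _).
rewrite big_mkcond /=; apply: eq_bigr => t _.
case: ifP => // /negbT; rewrite lt0r law_ge0 andbT negbK => /eqP ->.
by rewrite mul0r.
Qed.

Lemma law_ae (T : eqType) (X X' : Om -> T) :
  (forall w, 0 < P w -> X w = X' w) -> forall t, law P X t = law P X' t.
Proof.
move=> h t; rewrite /law big_mkcond [RHS]big_mkcond /=; apply: eq_bigr => w _.
have [Pw|] := ltP 0 (P w); first by rewrite h.
move=> Pw; have -> : P w = 0 by apply/eqP; rewrite eq_le Pw P0.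
by case: ifP; case: ifP.
Qed.

Lemma law_inj (T T' : eqType) (X : Om -> T) (h : T -> T') :
  injective h -> forall t, law P (h \o X) (h t) = law P X t.
Proof. by move=> hi t; rewrite /law; apply: eq_bigl => w /=; rewrite inj_eq. Qed.

Lemma law_comp (T T' : finType) (X : Om -> T) (g : T -> T') t :
  law P (g \o X) t = \sum_(a | g a == t) law P X a.
Proof.
rewrite /law (partition_big X (fun a => g a == t)) //=.
apply: eq_bigr => a /eqP ga; apply: eq_bigl => w.
by case: (X w =P a) => [->|]; rewrite ?andbF ?ga ?eqxx.
Qed.

Lemma law_pair_le (A B : eqType) (X : Om -> A) (Y : Om -> B) a b :
  law P (rvpair X Y) (a, b) <= law P X a.
Proof.
rewrite /law big_mkcond [X in _ <= X]big_mkcond /=; apply: ler_sum => w _.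
rewrite xpair_eqE; case: (X w == a) => //=; case: ifP => // _; exact: P0.
Qed.

Lemma law_pair_le2 (A B : eqType) (X : Om -> A) (Y : Om -> B) a b :
  law P (rvpair X Y) (a, b) <= law P Y b.
Proof.
rewrite /law big_mkcond [X in _ <= X]big_mkcond /=; apply: ler_sum => w _.
rewrite xpair_eqE andbC; case: (Y w == b) => //=; case: ifP => // _; exact: P0.
Qed.

End Basic.

Section Graph.
Variable R : realType.
Variable Om : finType.
Variable P : Om -> R.
Hypothesis P0 : forall w, 0 <= P w.
Variables (T1 T2 : finType) (X1 : Om -> T1) (X2 : Om -> T2).

Local Notation e := (gk_edge P X1 X2).
Lemma gk_sym : symmetric e.
Proof. by case=> [a|b] [a'|b']. Qed.
Local Notation csym := (sym_connect_sym gk_sym).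
Definition c1 (a : T1) := fingraph.root e (inl a).
Definition c2 (b : T2) := fingraph.root e (inr b).

Lemma c12_edge a b : 0 < law P (rvpair X1 X2) (a, b) -> c1 a = c2 b.
Proof. by move=> h; rewrite /c1 /c2; apply/(fingraph.rootP csym); apply: connect1. Qed.

Lemma c12 w : 0 < P w -> c1 (X1 w) = c2 (X2 w).
Proof. move=> h; apply: c12_edge; exact: (law_pos P0 (rvpair X1 X2) h). Qed.

Lemma edge_const (f : T1 + T2 -> R) :
  (forall u v, e u v -> f u = f v) -> forall u, f u = f (fingraph.root e u).
Proof.
move=> hf u.
have cl : closed e [pred x | f x == f u].
  by move=> x y exy; rewrite !inE (hf x y exy).
have := closed_connect cl (connect_root e u).
by rewrite !inE eqxx => /esym/eqP.
Qed.

End Graph.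

Section Upper.
Variable R : realType.
Variable Om : finType.
Variable P : Om -> R.
Hypothesis P0 : forall w, 0 <= P w.
Variables (T1 T2 TQ : finType) (X1 : Om -> T1) (X2 : Om -> T2) (Q : Om -> TQ).
Local Notation Y := (rvpair X1 X2).
Hypothesis M1 : markov P Q X1 Y.
Hypothesis M2 : markov P Q X2 Y.

Lemma m1 q a b : law P (rvpair Q Y) (q, (a, b)) * law P X1 a
   = law P (rvpair Q X1) (q, a) * law P Y (a, b).
Proof.
have := M1 q a (a, b).
have -> : law P (rvpair (rvpair Q X1) Y) (q, a, (a, b)) = law P (rvpair Q Y) (q, (a, b)).
  have hi : injective (fun s : TQ * (T1 * T2) => ((s.1, s.2.1), s.2)).
    by move=> [? ?] [? ?] /= [-> _ ->].
  exact: (@law_inj _ _ P _ _ (rvpair Q Y) _ hi (q, (a, b))).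
have -> : law P (rvpair X1 Y) (a, (a, b)) = law P Y (a, b) => //.
  have hi : injective (fun s : T1 * T2 => (s.1, s)).
    by move=> x y [_ ->].
  exact: (@law_inj _ _ P _ _ Y _ hi (a, b)).
Qed.

Lemma m2 q a b : law P (rvpair Q Y) (q, (a, b)) * law P X2 b
   = law P (rvpair Q X2) (q, b) * law P Y (a, b).
Proof.
have := M2 q b (a, b).
have -> : law P (rvpair (rvpair Q X2) Y) (q, b, (a, b)) = law P (rvpair Q Y) (q, (a, b)).
  have hi : injective (fun s : TQ * (T1 * T2) => ((s.1, s.2.2), s.2)).
    by move=> [? ?] [? ?] /= [-> _ ->].
  exact: (@law_inj _ _ P _ _ (rvpair Q Y) _ hi (q, (a, b))).
have -> : law P (rvpair X2 Y) (b, (a, b)) = law P Y (a, b) => //.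
  have hi : injective (fun s : T1 * T2 => (s.2, s)).
    by move=> x y [_ ->].
  exact: (@law_inj _ _ P _ _ Y _ hi (a, b)).
Qed.

Section Fixq.
Variable q : TQ.
Definition fq (u : T1 + T2) : R :=
  match u with
  | inl a => law P (rvpair Q X1) (q, a) / law P X1 a
  | inr b => law P (rvpair Q X2) (q, b) / law P X2 b
  end.

Lemma fq_edge a b : 0 < law P Y (a, b) -> fq (inl a) = fq (inr b).
Proof.
move=> hy.
have p1 : 0 < law P X1 a by apply: lt_le_trans hy (law_pair_le P0 _ _ _ _).
have p2 : 0 < law P X2 b by apply: lt_le_trans hy (law_pair_le2 P0 _ _ _ _).
have e1 : fq (inl a) = law P (rvpair Q Y) (q, (a, b)) / law P Y (a, b).
  apply/eqP; rewrite /= eqr_div ?lt0r_neq0 //; apply/eqP.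
  by rewrite m1.
have e2 : fq (inr b) = law P (rvpair Q Y) (q, (a, b)) / law P Y (a, b).
  apply/eqP; rewrite /= eqr_div ?lt0r_neq0 //; apply/eqP.
  by rewrite m2.
by rewrite e1 e2.
Qed.

Lemma fq_root u : fq u = fq (fingraph.root (gk_edge P X1 X2) u).
Proof.
apply: edge_const => -[a|b] [a'|b'] //= h.
- exact: fq_edge.
- exact/esym/fq_edge.
Qed.

Lemma fq_mul a : law P (rvpair Q X1) (q, a) = fq (inl a) * law P X1 a.
Proof.
have [z|pos] := eqVneq (law P X1 a) 0.
  rewrite z mulr0; apply: le_anti; rewrite law_ge0 // andbT -z.
  exact: (law_pair_le2 P0).
by rewrite /= divfK.
Qed.

Local Notation C := (fun w => c1 P X1 X2 (X1 w)).

Lemma lawQC c : law P (rvpair Q C) (q, c) = fq c * law P C c.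
Proof.
have -> : law P (rvpair Q C) (q, c) = \sum_(a | c1 P X1 X2 a == c) law P (rvpair Q X1) (q, a).
  rewrite /law (partition_big X1 (fun a => c1 P X1 X2 a == c)) => [|w]; last first.
    by rewrite /= xpair_eqE => /andP[_].
  apply: eq_bigr => a /eqP ca; apply: eq_bigl => w /=.
  rewrite !xpair_eqE; case: (X1 w =P a) => [->|]; by rewrite ?andbF ?ca ?eqxx ?andbT.
have -> : law P C c = \sum_(a | c1 P X1 X2 a == c) law P X1 a.
  exact: (law_comp P X1 (c1 P X1 X2)).
rewrite mulr_sumr; apply: eq_bigr => a /eqP ca.
by rewrite fq_mul fq_root -ca.
Qed.

Lemma key w : 0 < P w -> Q w = q ->
  law P (rvpair Q Y) (q, Y w) * law P C (C w) <= law P Q q * law P Y (Y w).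
Proof.
move=> pw qw.
have p1 : 0 < law P X1 (X1 w) by exact: (law_pos P0 X1 pw).
have hy : law P (rvpair Q Y) (q, Y w) = fq (inl (X1 w)) * law P Y (Y w).
  apply: (mulIf (lt0r_neq0 p1)); change (Y w) with (X1 w, X2 w); rewrite m1 (fq_mul (X1 w)); ring.
rewrite hy fq_root -/(c1 P X1 X2 (X1 w)) -mulrA mulrC -mulrA [_ * fq _]mulrC -lawQC.
rewrite [X in _ <= X]mulrC ler_wpM2l ?(law_ge0 P0) //; exact: (law_pair_le P0).
Qed.

End Fixq.

Lemma upper : minfo P Q Y <= CGK P X1 X2.
Proof.
rewrite /minfo /CGK !(entropyE P0).
suff h : \sum_w P w * ln (law P (rvpair Q Y) (rvpair Q Y w))
    + \sum_w P w * ln (law P (gk_common P X1 X2) (gk_common P X1 X2 w))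
  <= \sum_w P w * ln (law P Q (Q w)) + \sum_w P w * ln (law P Y (Y w)) by lra.
rewrite -!big_split /=; apply: ler_sum => w _; rewrite -!mulrDr.
have [pw0|pw] := eqVneq (P w) 0; first by rewrite pw0 !mul0r.
have {pw} pw : 0 < P w by rewrite lt0r pw P0.
apply: ler_wpM2l; first exact: P0.
have h1 := law_pos P0 (rvpair Q Y) pw.
have h2 := law_pos P0 (gk_common P X1 X2) pw.
have h3 := law_pos P0 Q pw.
have h4 := law_pos P0 Y pw.
rewrite -!lnM ?posrE // ler_ln ?posrE ?mulr_gt0 //.
exact: (key pw erefl).
Qed.

End Upper.

Section Gibbs.
Variable R : realType.
Variable Om : finType.
Variable P : Om -> R.
Hypothesis P0 : forall w, 0 <= P w.
Hypothesis P1 : \sum_w P w = 1.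
Variables (T1 T2 : finType) (X1 : Om -> T1) (X2 : Om -> T2).
Local Notation Y := (rvpair X1 X2).
Local Notation C := (gk_common P X1 X2).
Local Notation pC a := (law P C (c1 P X1 X2 a)).

Lemma pC_ge a : law P X1 a <= pC a.
Proof.
have -> : pC a = \sum_(a' | c1 P X1 X2 a' == c1 P X1 X2 a) law P X1 a'.
  exact: (law_comp P X1 (c1 P X1 X2)).
rewrite (bigD1 a) //= lerDl; apply: sumr_ge0 => ? _; exact: law_ge0.
Qed.

Lemma lawC2 k : \sum_(b | c2 P X1 X2 b == k) law P X2 b = law P C k.
Proof.
rewrite -(law_comp P X2 (c2 P X1 X2)); apply: law_ae => // w pw.
by rewrite /= -c12.
Qed.

Definition G (s : T1 * T2) : R :=
  law P X1 s.1 * law P X2 s.2 / (law P Y s * pC s.1).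

Lemma sumG : \sum_w P w * G (Y w) <= 1.
Proof.
rewrite -(sum_law P Y G).
rewrite (eq_bigr (fun s => law P Y (s.1, s.2) * G (s.1, s.2))); last by case.
rewrite -(pair_bigA _ (fun a b => law P Y (a, b) * G (a, b))) /=.
apply: (@le_trans _ _ (\sum_a \sum_(b | c2 P X1 X2 b == c1 P X1 X2 a)
           law P X1 a / pC a * law P X2 b)).
  apply: ler_sum => a _; rewrite [X in _ <= X]big_mkcond; apply: ler_sum => b _ /=.
  have [z|nz] := eqVneq (law P Y (a, b)) 0.
    rewrite z mul0r; case: ifP => // _.
    by apply: mulr_ge0; [apply: divr_ge0|]; apply: law_ge0.
  have hy : 0 < law P Y (a, b) by rewrite lt0r nz law_ge0.
  rewrite -(c12_edge hy) eqxx.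
  have p1 : 0 < law P X1 a by apply: lt_le_trans hy (law_pair_le P0 _ _ _ _).
  have pc : 0 < pC a by apply: lt_le_trans p1 (pC_ge a).
  rewrite /G /= le_eqVlt; apply/orP; left; apply/eqP; field.
  by rewrite (lt0r_neq0 pc) (lt0r_neq0 hy).
apply: (@le_trans _ _ (\sum_a law P X1 a)); last first.
  rewrite (eq_bigr (fun a => law P X1 a * 1)) => [|a _]; last by rewrite mulr1.
  rewrite (sum_law P X1 (fun _ => 1)) (eq_bigr P) ?P1 // => w _; exact: mulr1.
apply: ler_sum => a _; rewrite -mulr_sumr lawC2.
have [z|nz] := eqVneq (pC a) 0; first by rewrite z mulr0 law_ge0.
by rewrite divfK.
Qed.

Lemma gibbs : CGK P X1 X2 <= minfo P X1 X2.
Proof.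
rewrite /minfo /CGK !(entropyE P0).
suff h : \sum_w P w * (ln (law P X1 (X1 w)) + ln (law P X2 (X2 w))
             - ln (law P Y (Y w)) - ln (law P C (C w))) <= 0.
  set S := \sum_w _ in h.
  have E : S = \sum_w P w * ln (law P X1 (X1 w)) + \sum_w P w * ln (law P X2 (X2 w))
     - \sum_w P w * ln (law P Y (Y w)) - \sum_w P w * ln (law P C (C w)).
    rewrite /S -big_split -!sumrB /=; apply: eq_bigr => w _; ring.
  move: h; rewrite E; lra.
apply: (@le_trans _ _ (\sum_w (P w * G (Y w) - P w))).
  apply: ler_sum => w _.
  have [pw0|pw] := eqVneq (P w) 0; first by rewrite pw0 !mul0r subr0.
  have {pw} pw : 0 < P w by rewrite lt0r pw P0.
  have h1 := law_pos P0 X1 pw.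
  have h2 := law_pos P0 X2 pw.
  have h3 := law_pos P0 Y pw.
  have h4 := law_pos P0 C pw.
  rewrite -[X in _ <= _ - X]mulr1 -mulrBr ler_wpM2l ?P0 //.
  have hr : 0 < G (Y w) by rewrite /G divr_gt0 ?mulr_gt0.
  have lnr : ln (G (Y w)) = ln (law P X1 (X1 w)) + ln (law P X2 (X2 w))
             - ln (law P Y (Y w)) - ln (law P C (C w)).
    have lnVx (x : R) : 0 < x -> ln x^-1 = - ln x by move=> hx; apply: lnV; rewrite posrE.
    rewrite /G /= lnM ?posrE ?invr_gt0 ?mulr_gt0 // lnVx ?mulr_gt0 //.
    rewrite !lnM ?posrE //; lra.
  rewrite -lnr; have := expR_ge1Dx (ln (G (Y w))); rewrite lnK ?posrE //; lra.
rewrite sumrB P1 subr_le0; exact: sumG.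
Qed.

End Gibbs.

Section Transport.
Variable R : realType.

Lemma law_comp_eq (Om Om' : finType) (P : Om -> R) (P' : Om' -> R)
  (T T' : finType) (Z : Om -> T) (Z' : Om' -> T) (g : T -> T') :
  (forall t, law P Z t = law P' Z' t) -> forall s, law P (g \o Z) s = law P' (g \o Z') s.
Proof.
move=> h s; rewrite (law_comp P Z g) (law_comp P' Z' g).
by apply: eq_bigr => t _; rewrite h.
Qed.

Lemma entropy_law (Om Om' : finType) (P : Om -> R) (P' : Om' -> R)
  (T : finType) (Z : Om -> T) (Z' : Om' -> T) :
  (forall t, law P Z t = law P' Z' t) -> entropy P Z = entropy P' Z'.
Proof.
by move=> h; rewrite /entropy; congr (- _); apply: eq_big => t; rewrite h.
Qed.

Variable Om : finType.
Variable P : Om -> R.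
Hypothesis P0 : forall w, 0 <= P w.

Lemma entropy_inj (T T' : finType) (X : Om -> T) (k : T -> T') :
  injective k -> entropy P (k \o X) = entropy P X.
Proof.
move=> hi; rewrite !(entropyE P0); congr (- _); apply: eq_bigr => w _.
by rewrite /= (law_inj P X hi).
Qed.

Lemma markov_ae (TA TB TC : eqType) (A : Om -> TA) (B : Om -> TB) (C C' : Om -> TC) :
  (forall w, 0 < P w -> C w = C' w) -> markov P A B C -> markov P A B C'.
Proof.
move=> h M a b c.
have e1 : forall t, law P (rvpair (rvpair A B) C') t = law P (rvpair (rvpair A B) C) t.
  by apply: law_ae => // w pw; rewrite /rvpair h.
have e2 : forall t, law P (rvpair B C') t = law P (rvpair B C) t.
  by apply: law_ae => // w pw; rewrite /rvpair h.
by rewrite e1 e2; apply: M.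
Qed.

Lemma markov_fun (TA TB TC : eqType) (A : Om -> TA) (B : Om -> TB) (C : Om -> TC)
  (g : TB -> TA) :
  (forall w, 0 < P w -> A w = g (B w)) -> markov P A B C.
Proof.
move=> h a b c.
have e1 : law P (rvpair (rvpair A B) C) ((a, b), c)
    = if a == g b then law P (rvpair B C) (b, c) else 0.
  rewrite (law_ae P0 (X' := rvpair (rvpair (fun w => g (B w)) B) C)); last first.
    by move=> w pw; rewrite /rvpair h.
  rewrite /law; case: ifP => [/eqP ->|ne].
    apply: eq_bigl => w /=; rewrite !xpair_eqE.
    by case: (B w =P b) => [->|]; rewrite ?eqxx ?andbF.
  rewrite big_pred0 // => w /=; rewrite !xpair_eqE.
  by case: (B w =P b) => [->|]; rewrite ?andbF // eq_sym ne.
have e2 : law P (rvpair A B) (a, b) = if a == g b then law P B b else 0.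
  rewrite (law_ae P0 (X' := rvpair (fun w => g (B w)) B)); last first.
    by move=> w pw; rewrite /rvpair h.
  rewrite /law; case: ifP => [/eqP ->|ne].
    apply: eq_bigl => w /=; rewrite !xpair_eqE.
    by case: (B w =P b) => [->|]; rewrite ?eqxx ?andbF.
  rewrite big_pred0 // => w /=; rewrite !xpair_eqE.
  by case: (B w =P b) => [->|]; rewrite ?andbF // eq_sym ne.
rewrite e1 e2; case: ifP => _; last by rewrite !mul0r.
by rewrite mulrC.
Qed.

End Transport.

Unset Implicit Arguments.
Set Strict Implicit.

Theorem lemma8 (R : realType) (Om : finType) (P : Om -> R)
  (T1 T2 : finType) (X1 : Om -> T1) (X2 : Om -> T2) :
  is_pmf P ->
  Icap2 P X1 X2 (rvpair X1 X2) = CGK P X1 X2 /\ CGK P X1 X2 <= minfo P X1 X2.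
Proof.
move=> [P0 P1]; split; last exact: gibbs.
rewrite /Icap2; match goal with |- sup ?E = _ => set S := E end.
have inS : S (CGK P X1 X2).
  exists Om, P, (T1 + T2)%type, (gk_common P X1 X2), X1, X2, (rvpair X1 X2).
  split => //.
  - have h1 : forall w, 0 < P w -> gk_common P X1 X2 w = c1 P X1 X2 (X1 w) by [].
    exact: (@markov_fun R Om P P0 _ _ _ _ _ (rvpair X1 X2) _ h1).
  - have h2 : forall w, 0 < P w -> gk_common P X1 X2 w = c2 P X1 X2 (X2 w).
      move=> w pw; exact: (c12 P0 X1 X2 pw).
    exact: (@markov_fun R Om P P0 _ _ _ _ _ (rvpair X1 X2) _ h2).
  - rewrite /minfo.
    have -> : entropy P (rvpair (gk_common P X1 X2) (rvpair X1 X2))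
        = entropy P (rvpair X1 X2).
      have hi : injective (fun y : T1 * T2 => (c1 P X1 X2 y.1, y)).
        by move=> x y [_ ->].
      exact: (entropy_inj P0 (rvpair X1 X2) hi).
    rewrite /CGK; lra.
have ub : ubound S (CGK P X1 X2).
  move=> v [Om' [P' [TQ [Q [X1' [X2' [Y' [[P'0 P'1] Hlaw Ma Mb ->]]]]]]]].
  have Yae : forall w, 0 < P' w -> Y' w = rvpair X1' X2' w.
    move=> w pw; have h := law_pos P'0 (rvpair (rvpair X1' X2') Y') pw.
    rewrite Hlaw in h; apply/eqP; apply: contraTT h => ne.
    rewrite /law big_pred0 ?ltxx // => u; rewrite xpair_eqE.
    apply/negP => /andP[/eqP e1 /eqP e2]; move: ne.
    by rewrite -e2 -e1 eqxx.
  have Hpair : forall s, law P' (rvpair X1' X2') s = law P (rvpair X1 X2) s.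
    move=> s; symmetry.
    exact: (law_comp_eq (fun z : (T1 * T2) * (T1 * T2) => z.1) (fun t => esym (Hlaw t)) s).
  have Ee : gk_edge P' X1' X2' = gk_edge P X1 X2.
    apply: boolp.funext => u; apply: boolp.funext => u'.
    by case: u => [a|b]; case: u' => [a'|b']; rewrite /gk_edge ?Hpair.
  have -> : minfo P' Q Y' = minfo P' Q (rvpair X1' X2').
    rewrite /minfo; congr (_ + _ - _).
      by apply: entropy_law; apply: law_ae.
    by apply: entropy_law; apply: law_ae => // w pw; rewrite /rvpair Yae.
  apply: (le_trans (upper P'0 (markov_ae P'0 Yae Ma) (markov_ae P'0 Yae Mb))).
  rewrite le_eqVlt; apply/orP; left; apply/eqP.
  rewrite /CGK /gk_common Ee; apply: entropy_law => t.
  exact: (law_comp_eq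
    (fun z : (T1 * T2) * (T1 * T2) => fingraph.root (gk_edge P X1 X2) (inl z.1.1))
    Hlaw t).
apply/le_anti/andP; split.
  by apply: ge_sup => //; exists (CGK P X1 X2).
by apply: ub_le_sup => //; exists (CGK P X1 X2).
Qed.
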